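(* Let $\mathbb{K}$ be a field of characteristic $0$, $R=\mathbb{K}[x_1,\dots,x_n]$, $I\subseteq R$ a zero-dimensional ideal and $P$ a minimal prime of $I$. Then for every integer $d\ge 0$, $D_P^{(d)}[I]=D_P[I+P^{d+1}]$.
   Context: $W_{\kappa(P)}$ denotes the set of operators $D=\sum_\alpha c_\alpha\partial^\alpha$ (finite sums) with $c_\alpha\in\kappa(P)=R/P$, $\partial^\alpha=\partial_1^{\alpha_1}\cdots\partial_n^{\alpha_n}$, $\partial_i=\partial/\partial x_i$. For $f\in R$, $\langle D,f\rangle=\sum_\alpha c_\alpha\overline{\partial^\alpha f}\in\kappa(P)$ (image modulo $P$). For an ideal $J$, $D_P[J]=\{D\in W_{\kappa(P)}:\langle D,f\rangle=0\ \forall f\in J\}$. The $\partial$-degree of $D$ is its total degree as a polynomial in $\partial_1,\dots,\partial_n$, and $D_P^{(d)}[I]:=\{D\in D_P[I]: \partial\text{-degree of }D\le d\}$. *)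

(* Defs.v *)
From HB Require Import structures.
From mathcomp Require Import all_boot all_algebra.
From mathcomp Require Import mpoly.
Set Implicit Arguments. Unset Strict Implicit. Unset Printing Implicit Defensive.
Import GRing.Theory.
Local Open Scope ring_scope.

Section Defs.
Variables (K : fieldType) (n : nat).
Local Notation R := {mpoly K[n]}.

Definition is_ideal (I : R -> Prop) : Prop :=
  [/\ I 0, (forall f g, I f -> I g -> I (f + g)) & (forall r f, I f -> I (r * f))].

Definition is_prime (P : R -> Prop) : Prop :=
  [/\ is_ideal P, ~ P 1 & (forall a b, P (a * b) -> P a \/ P b)].

Definition is_minimal_prime (I P : R -> Prop) : Prop :=
  [/\ is_prime P, (forall f, I f -> P f) &
      (forall Q, is_prime Q -> (forall f, I f -> Q f) -> (forall f, Q f -> P f) ->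
                 forall f, P f -> Q f)].

(* zero-dimensional: R/I is a finite-dimensional K-vector space, i.e. spanned by
   the classes of finitely many polynomials *)
Definition zero_dimensional (I : R -> Prop) : Prop :=
  is_ideal I /\
  exists B : seq R, forall f, exists c : nat -> K,
      I (f - \sum_(i < size B) c i *: B`_i).

Definition ideal_add (I J : R -> Prop) : R -> Prop :=
  fun f => exists g h, [/\ I g, J h & f = g + h].

Definition ideal_mul (I J : R -> Prop) : R -> Prop :=
  fun f => exists s : seq (R * R),
      (forall p, p \in s -> I p.1 /\ J p.2) /\ f = \sum_(p <- s) p.1 * p.2.

Fixpoint ideal_pow (P : R -> Prop) (k : nat) : R -> Prop :=
  match k with
  | 0 => fun _ => True
  | k'.+1 => ideal_mul (ideal_pow P k') P
  end.

(* A differential operator D = \sum_a c_a d^a with coefficients in kappa(P) = R/P is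
   represented by a polynomial in the d_i with coefficients in R (representatives of
   the classes in R/P): D@_a is (a representative of) c_a. *)
Definition diffop := {mpoly R[n]}.

(* <D, f> computed in R; its image in kappa(P) is zero iff it lies in P *)
Definition dpair (D : diffop) (f : R) : R :=
  \sum_(a <- msupp D) D@_a * mderivm a f.

Definition in_DP (P J : R -> Prop) (D : diffop) : Prop :=
  forall f, J f -> P (dpair D f).

(* the d-degree of D (as an operator over kappa(P)) is at most d:
   all coefficients c_a with |a| > d vanish in kappa(P) *)
Definition ddeg_le (P : R -> Prop) (D : diffop) (d : nat) : Prop :=
  forall a : 'X_{1..n}, (d < mdeg a)%N -> P (D@_a).

Definition in_DPd (P I : R -> Prop) (d : nat) (D : diffop) : Prop :=
  in_DP P I D /\ ddeg_le P D d.

End Defs.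

(* Main.v *)
Require Import Defs.
From HB Require Import structures.
From mathcomp Require Import all_boot all_algebra.
From mathcomp Require Import mpoly.
From mathcomp Require Import ring.
From Stdlib Require Import Classical ClassicalEpsilon.
Set Implicit Arguments. Unset Strict Implicit. Unset Printing Implicit Defensive.
Import GRing.Theory.
Local Open Scope ring_scope.

Section Aux.
Variables (K : fieldType) (n : nat).
Local Notation R := {mpoly K[n]}.
Variable (P : R -> Prop).
Hypothesis hP : is_ideal P.

Lemma id0 : P 0. Proof. by case: hP. Qed.
Lemma idD f g : P f -> P g -> P (f + g). Proof. by case: hP => _ h _; apply: h. Qed.
Lemma idMl r f : P f -> P (r * f). Proof. by case: hP => _ _ h; apply: h. Qed.
Lemma idMr r f : P f -> P (f * r). Proof. by rewrite mulrC; apply: idMl. Qed.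
Lemma idN f : P f -> P (- f).
Proof. by move=> h; rewrite -mulN1r; apply: idMl. Qed.
Lemma idB f g : P f -> P g -> P (f - g).
Proof. by move=> h1 h2; apply: idD => //; apply: idN. Qed.
Lemma idZ (c : K) f : P f -> P (c *: f).
Proof. by move=> h; rewrite -mul_mpolyC; apply: idMl. Qed.
Lemma id_sum (I : Type) (r : seq I) (F : I -> R) :
  (forall i, P (F i)) -> P (\sum_(i <- r) F i).
Proof.
move=> h; elim: r => [|x r ih]; first by rewrite big_nil; apply: id0.
by rewrite big_cons; apply: idD.
Qed.
Lemma id_sumo m (F : 'I_m -> R) :
  (forall i, P (F i)) -> P (\sum_(i < m) F i).
Proof. by move=> h; apply: id_sum. Qed.
Lemma id_sum_mem (I : eqType) (r : seq I) (F : I -> R) :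
  (forall i, i \in r -> P (F i)) -> P (\sum_(i <- r) F i).
Proof.
elim: r => [|x r ih] h; first by rewrite big_nil; apply: id0.
rewrite big_cons; apply: idD; first by apply: h; rewrite inE eqxx.
by apply: ih => i hi; apply: h; rewrite inE hi orbT.
Qed.
End Aux.

Section Pow.
Variables (K : fieldType) (n : nat).
Local Notation R := {mpoly K[n]}.
Variable (P : R -> Prop).
Hypothesis hP : is_ideal P.

Lemma pow_ideal k : is_ideal (ideal_pow P k).
Proof.
elim: k => [|k ih]; first by split.
split.
- by exists [::]; split => //; rewrite big_nil.
- move=> f g [s1 [h1 ->]] [s2 [h2 ->]]; exists (s1 ++ s2); split.
    by move=> p; rewrite mem_cat => /orP [] ?; [apply: h1 | apply: h2].
  by rewrite big_cat.
- move=> r f [s [h ->]]; exists [seq (r * p.1, p.2) | p <- s]; split.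
    move=> p /mapP [q hq ->] /=; have [h1 h2] := h q hq; split => //.
    exact: (idMl ih).
  by rewrite big_map mulr_sumr; apply: eq_bigr => p _ /=; rewrite mulrA.
Qed.

Lemma pow_mulP k f g : ideal_pow P k f -> P g -> ideal_pow P k.+1 (f * g).
Proof. by move=> h1 h2; exists [:: (f, g)]; split; [move=> p; rewrite inE => /eqP -> | rewrite big_seq1]. Qed.

Lemma pow_mono k f : ideal_pow P k.+1 f -> ideal_pow P k f.
Proof.
elim: k f => [//|k ih] f [s [h ->]].
exists s; split => // p hp; have [h1 h2] := h p hp; split => //; exact: ih.
Qed.

Lemma pow_le k m f : (k <= m)%N -> ideal_pow P m f -> ideal_pow P k f.
Proof.
move=> /subnK <-; elim: (m - k)%N f => [//|j ih] f h.
by apply: ih; apply: pow_mono; rewrite -addSn.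
Qed.

Lemma pow1 k f : ideal_pow P k.+1 f -> P f.
Proof.
move=> [s [h ->]]; apply: (id_sum_mem hP) => p hp.
by have [_ h2] := h p hp; apply: (idMl hP).
Qed.

Lemma pow_deriv k i f : ideal_pow P k.+1 f -> ideal_pow P k (mderiv i f).
Proof.
elim: k f => [//|k ih] f [s [h ->]].
rewrite raddf_sum /=; apply: (id_sum_mem (pow_ideal k.+1)) => p hp.
have [h1 h2] := h p hp; rewrite mderivM; apply: (idD (pow_ideal k.+1)).
  by apply: pow_mulP => //; apply: ih.
by apply: (idMr (pow_ideal k.+1)).
Qed.

Lemma pow_derivs s j f : ideal_pow P (j + size s) f -> ideal_pow P j (foldr (@mderiv n K) f s).
Proof.
elim: s j => [|i s ih] j /=; first by rewrite addn0.
by move=> h; apply: pow_deriv; apply: ih; rewrite addSnnS.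
Qed.

Lemma pow_mderivm a f k : ideal_pow P k f -> (mdeg a < k)%N -> P (mderivm a f).
Proof.
move=> hf ha; rewrite mderivm_foldr.
set s := flatten _.
have hs : size s = mdeg a.
  rewrite /s size_flatten /shape -map_comp sumnE big_map mdegE.
  rewrite /index_enum -enumT; apply: eq_bigr => i _ /=; by rewrite size_nseq.
apply: (@pow1 0); apply: pow_derivs; rewrite hs.
by apply: (pow_le _ hf); rewrite add1n.
Qed.
End Pow.

Section Sep.
Variables (K : fieldType) (n : nat).
Local Notation R := {mpoly K[n]}.

Definition univ (j : 'I_n) (h : R) := forall k, k != j -> mderiv k h = 0.

Lemma iter_mderiv_comm i l k (x : R) :
  mderiv l (iter k (mderiv i) x) = iter k (mderiv i) (mderiv l x).
Proof. by elim: k => //= k ih; rewrite mderiv_comm ih. Qed.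

Lemma univ_iter j k x : univ j x -> univ j (iter k (mderiv j) x).
Proof.
move=> h l hl; rewrite iter_mderiv_comm h //.
by elim: k => //= k ->; rewrite mderiv0.
Qed.

Lemma deriv0_prod i (r : seq 'I_n) (Pr : pred 'I_n) (F : 'I_n -> R) :
  (forall j, Pr j -> mderiv i (F j) = 0) -> mderiv i (\prod_(j <- r | Pr j) F j) = 0.
Proof.
move=> h; apply: (big_ind (fun p => mderiv i p = 0)) => //.
- by rewrite -mpolyC1 mderivC.
- by move=> x y hx hy; rewrite mderivM hx hy mul0r mulr0 addr0.
Qed.

Lemma deriv_prod_sep i (F : 'I_n -> R) :
  (forall j, j != i -> mderiv i (F j) = 0) ->
  mderiv i (\prod_j F j) = \prod_j (if j == i then mderiv i (F j) else F j).
Proof.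
move=> h; rewrite (bigD1 i) //= mderivM deriv0_prod // mulr0 addr0.
rewrite [RHS](bigD1 i) //= eqxx; congr (_ * _).
by apply: eq_bigr => j /negbTE ->.
Qed.

Lemma iter_prod_sep i k (F : 'I_n -> R) :
  (forall j, univ j (F j)) ->
  iter k (mderiv i) (\prod_j F j) = \prod_j (if j == i then iter k (mderiv i) (F j) else F j).
Proof.
move=> hF; elim: k => [|k ih] /=.
  by apply: eq_bigr => j _; case: ifP.
rewrite ih deriv_prod_sep.
  by apply: eq_bigr => j _; case: (j == i).
by move=> j /negbTE hj; rewrite hj; apply: hF; rewrite eq_sym hj.
Qed.

Lemma foldr_prod (a : 'X_{1..n}) (F : 'I_n -> R) (r : seq 'I_n) :
  (forall j, univ j (F j)) -> uniq r ->
  foldr (fun i => iter (a i) (mderiv i)) (\prod_j F j) r =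
  \prod_j (if j \in r then iter (a j) (mderiv j) (F j) else F j).
Proof.
move=> hF; elim: r => [|i r ih] /=; first by move=> _; apply: eq_bigr.
move=> /andP [hi hr]; rewrite ih // iter_prod_sep.
  apply: eq_bigr => j _; rewrite inE; case: (eqVneq j i) => [->|] //=.
  by rewrite (negbTE hi).
move=> j; case: ifP => _ //; exact: univ_iter.
Qed.

Lemma mderivm_prod (a : 'X_{1..n}) (F : 'I_n -> R) :
  (forall j, univ j (F j)) ->
  mderivm a (\prod_j F j) = \prod_j iter (a j) (mderiv j) (F j).
Proof.
move=> hF; rewrite /mderivm foldr_prod //; last exact: enum_uniq.
by apply: eq_bigr => j _; rewrite mem_enum.
Qed.
End Sep.

Section Univ.
Variables (K : fieldType) (n : nat).
Local Notation R := {mpoly K[n]}.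

Lemma deriv_pow j (g : R) p : mderiv j (g ^+ p.+1) = p.+1%:R * g ^+ p * mderiv j g.
Proof.
elim: p => [|p ih]; first by rewrite expr1 expr0 mulr1 mul1r.
rewrite exprS mderivM ih exprS [p.+2]lock -addn1 -lock natrD; ring.
Qed.

Lemma iter_pow j (g : R) m b : (m <= b)%N ->
  exists h, iter m (mderiv j) (g ^+ b) =
    g ^+ (b - m) * ((b ^_ m)%:R * (mderiv j g) ^+ m + g * h).
Proof.
elim: m => [|m ih] hm.
  by exists 0; rewrite subn0 ffactn0 /= mulr0 addr0 expr0 mulr1 mulr1.
have [h eh] := ih (ltnW hm).
have hk : (b - m = (b - m.+1).+1)%N by rewrite subnS prednK // subn_gt0.
set k := (b - m.+1)%N in hk *.
set c := (b ^_ m)%:R : R.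
set u := mderiv j g.
exists ((k.+1)%:R * u * h + mderiv j (c * u ^+ m + g * h)).
rewrite iterS eh hk mderivM deriv_pow ffactnSr natrM -/c hk.
rewrite exprS -/u [u ^+ m.+1]exprS; move: (mderiv j _) => Y; clearbody u c k; ring.
Qed.
End Univ.

Section Ev.
Variables (K : fieldType) (n : nat).
Local Notation R := {mpoly K[n]}.

Definition ev (j : 'I_n) (q : {poly K}) : R := (map_poly (@mpolyC n K) q).['X_j].

Lemma mderivXi k j : mderiv k ('X_j : R) = if k == j then 1 else 0.
Proof.
rewrite mderivX mnm1E eq_sym; case: eqVneq => [->|_].
  have -> : (U_(j) - U_(j) = 0)%MM by apply/mnmP => i; rewrite mnmBE mnm0E subnn.
  by rewrite mpolyX0 scale1r.
by rewrite scale0r.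
Qed.

Lemma ev_const j c : ev j c%:P = c%:MP.
Proof. by rewrite /ev map_polyC hornerC. Qed.

Lemma ev_step j q c : ev j (q * 'X + c%:P) = ev j q * 'X_j + c%:MP.
Proof. by rewrite /ev rmorphD rmorphM /= map_polyX map_polyC hornerD hornerM hornerX hornerC. Qed.

Lemma ev_add j p q : ev j (p + q) = ev j p + ev j q.
Proof. by rewrite /ev rmorphD hornerD. Qed.

Lemma ev_mulX j p : ev j (p * 'X) = ev j p * 'X_j.
Proof. by rewrite /ev rmorphM /= map_polyX hornerM hornerX. Qed.

Lemma ev_deriv j q k : mderiv k (ev j q) = if k == j then ev j q^`() else 0.
Proof.
elim/poly_ind: q => [|q c ih].
  by rewrite /ev !rmorph0 horner0 mderiv0 deriv0 rmorph0 horner0; case: ifP.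
rewrite ev_step mderivD mderivM mderivC addr0 ih mderivXi derivMXaddC ev_add ev_mulX.
by case: (k == j); rewrite ?mulr1 ?mulr0 ?mul0r ?addr0 // addrC.
Qed.
End Ev.

Section Good.
Variables (K : fieldType) (n : nat).
Local Notation R := {mpoly K[n]}.
Hypothesis charK0 : [pchar K] =i pred0.
Variable (P : R -> Prop).
Hypothesis hPp : is_prime P.

Lemma P_const c : c != 0 -> ~ P c%:MP.
Proof.
move=> hc hPc; case: hPp => hid h1 _; apply: h1.
have := idMl hid (c^-1)%:MP hPc.
by rewrite -mpolyCM mulVf // mpolyC1.
Qed.

Lemma natK_neq0 m : (m%:R : K) != 0 = (m != 0)%N.
Proof. by rewrite ((pcharf0P K).1 charK0). Qed.

Lemma deriv_neq0 (q : {poly K}) : (1 < size q)%N -> q^`() != 0.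
Proof.
move=> hs; apply/eqP => h.
have := coef_deriv q (size q).-2; rewrite h coef0 => /esym/eqP.
rewrite -mulr_natr mulf_eq0 => /orP [].
  have -> : (size q).-2.+1 = (size q).-1 by case: (size q) hs => [|[|k]].
  rewrite -lead_coefE lead_coef_eq0 => /eqP hq; move: hs; by rewrite hq size_poly0.
by apply/negP; rewrite natK_neq0.
Qed.

Lemma good_from j q : q != 0 -> P (ev j q) ->
  exists p : {poly K}, [/\ p != 0, P (ev j p) & ~ P (ev j p^`())].
Proof.
move: {2}(size q) (leqnn (size q)) => N.
elim: N q => [|N ih] q hs hq0 hPq.
  by move: hq0; rewrite -size_poly_eq0; move: hs; case: (size q).
case: (classic (P (ev j q^`()))) => h; last by exists q.
case: (leqP (size q) 1) => hs1.
  move/size1_polyC: hs1 => eq; rewrite eq in hq0 hPq.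
  rewrite ev_const in hPq; exfalso; apply: (P_const _ hPq).
  by rewrite -(polyC_eq0 (R:=K)).
apply: (ih q^`()) => //; last by apply: deriv_neq0.
by rewrite -ltnS; apply: leq_trans hs; apply: lt_size_deriv.
Qed.
End Good.

Section ZD.
Variables (K : fieldType) (n : nat).
Local Notation R := {mpoly K[n]}.
Variables (I P : R -> Prop).
Hypothesis hI : zero_dimensional I.
Hypothesis hIP : forall f, I f -> P f.

Lemma exists_q j : exists q : {poly K}, q != 0 /\ P (ev j q).
Proof.
case: hI => hid [B hB].
set N := size B.
pose c (i : nat) : nat -> K :=
  proj1_sig (constructive_indefinite_description _ (hB ('X_j ^+ i))).
have hc i : I ('X_j ^+ i - \sum_(l < N) c i l *: B`_l).
  exact: (proj2_sig (constructive_indefinite_description _ (hB ('X_j ^+ i)))).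
pose A : 'M[K]_(N.+1, N) := \matrix_(i, l) c i l.
have [v [hv0 hvA]] : exists v : 'rV[K]_N.+1, v != 0 /\ v *m A = 0.
  apply: NNPP => hn.
  have : row_free A.
    apply: inj_row_free => v hv; apply: NNPP => hv0; apply: hn.
    by exists v; split => //; apply/eqP.
  by rewrite /row_free => /eqP h; have := rank_leq_col A; rewrite h ltnn.
exists (\poly_(i < N.+1) v 0 (inord i)); split.
  apply: contra hv0 => /eqP h; apply/eqP/rowP => i; rewrite mxE.
  have := congr1 (fun p : {poly K} => p`_i) h.
  by rewrite coef_poly ltn_ord coef0 inord_val.
apply: hIP.
have -> : ev j (\poly_(i < N.+1) v 0 (inord i)) =
    \sum_(i < N.+1) v 0 i *: ('X_j ^+ i - \sum_(l < N) c i l *: B`_l).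
  rewrite /ev (horner_coef_wide _ (n := N.+1)); last first.
    by rewrite size_map_poly; apply: size_poly.
  have -> : \sum_(i < N.+1) v 0 i *: (('X_j : R) ^+ i - \sum_(l < N) c i l *: B`_l) =
      \sum_(i < N.+1) v 0 i *: ('X_j : R) ^+ i -
      \sum_(l < N) (v *m A) 0 l *: B`_l.
    rewrite (eq_bigr (fun i : 'I_N.+1 => v 0 i *: ('X_j : R) ^+ i -
                 \sum_(l < N) (v 0 i * c i l) *: B`_l)); last first.
      by move=> i _; rewrite scalerBr scaler_sumr; congr (_ - _);
         apply: eq_bigr => l _; rewrite scalerA.
    rewrite sumrB; congr (_ - _); rewrite exchange_big /=.
    by apply: eq_bigr => l _; rewrite mxE scaler_suml; apply: eq_bigr => i _; rewrite mxE.
  rewrite hvA.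
  rewrite (eq_bigr (fun l : 'I_N => 0)); last by move=> l _; rewrite mxE scale0r.
  rewrite [X in _ - X]big1 // subr0; apply: eq_bigr => i _.
  by rewrite coef_map /= coef_poly ltn_ord inord_val mul_mpolyC.
apply: (id_sumo hid) => i; apply: (idZ hid); exact: hc.
Qed.
End ZD.

Section Key.
Variables (K : fieldType) (n : nat).
Local Notation R := {mpoly K[n]}.
Hypothesis charK0 : [pchar K] =i pred0.
Variables (I P : R -> Prop).
Hypothesis hI : zero_dimensional I.
Hypothesis hPp : is_prime P.
Hypothesis hIP : forall f, I f -> P f.

Let hid : is_ideal P. Proof. by case: hPp. Qed.
Let hP1 : ~ P 1. Proof. by case: hPp. Qed.
Let hpr a b : P (a * b) -> P a \/ P b. Proof. by case: hPp => _ _; apply. Qed.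

Lemma exists_g j : exists g : R, [/\ P g, univ j g & ~ P (mderiv j g)].
Proof.
have [q [hq0 hPq]] := exists_q hI hIP j.
have [p [hp0 hPp' hnP]] := good_from charK0 hPp hq0 hPq.
exists (ev j p); split => //.
  by move=> k hk; rewrite ev_deriv (negbTE hk).
by rewrite ev_deriv eqxx.
Qed.

Lemma prime_pow (x : R) m : P (x ^+ m) -> P x.
Proof.
elim: m => [|m ih]; first by rewrite expr0 => h; exfalso; apply: hP1.
by rewrite exprS => /hpr [] // /ih.
Qed.

Lemma prime_prod (r : seq 'I_n) (x : 'I_n -> R) :
  P (\prod_(j <- r) x j) -> exists j, P (x j).
Proof.
elim: r => [|i r ih]; first by rewrite big_nil => h; exfalso; apply: hP1.
by rewrite big_cons => /hpr [h|/ih //]; exists i.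
Qed.

Lemma prod_congr (r : seq 'I_n) (x y : 'I_n -> R) :
  (forall j, P (x j - y j)) -> P (\prod_(j <- r) x j - \prod_(j <- r) y j).
Proof.
move=> h; elim: r => [|i r ih]; first by rewrite !big_nil subrr; apply: (id0 hid).
rewrite !big_cons.
have -> : x i * \prod_(j <- r) x j - y i * \prod_(j <- r) y j =
  (x i - y i) * \prod_(j <- r) x j + y i * (\prod_(j <- r) x j - \prod_(j <- r) y j).
  by ring.
by apply: (idD hid); [apply: (idMr hid) | apply: (idMl hid)].
Qed.

Lemma univ_pow (j : 'I_n) (x : R) m : univ j x -> univ j (x ^+ m).
Proof.
move=> h k hk; case: m => [|m]; first by rewrite expr0 -mpolyC1 mderivC.
by rewrite deriv_pow h // mulr0.
Qed.

Lemma pow_mulX k m (x y : R) : ideal_pow P k y -> P x -> ideal_pow P (m + k) (x ^+ m * y).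
Proof.
move=> hy hx; elim: m => [|m ih]; first by rewrite expr0 mul1r.
rewrite addSn exprS -mulrA mulrC; exact: pow_mulP.
Qed.

Variables (D : diffop K n) (d : nat).
Hypothesis hD : in_DP P (ideal_add I (ideal_pow P d.+1)) D.

Lemma key (b : 'X_{1..n}) : (d < mdeg b)%N ->
  (forall a : 'X_{1..n}, (mdeg b < mdeg a)%N -> P (D@_a)) -> P (D@_b).
Proof.
move=> hdb hhi.
have [G hG] : exists G : 'I_n -> R, forall j, [/\ P (G j), univ j (G j) & ~ P (mderiv j (G j))].
  exists (fun j => proj1_sig (constructive_indefinite_description _ (exists_g j))) => j.
  exact: (proj2_sig (constructive_indefinite_description _ (exists_g j))).
pose F j := G j ^+ b j.
pose f := \prod_j F j.
have univF j : univ j (F j) by apply: univ_pow; case: (hG j).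
have hf : ideal_pow P d.+1 f.
  apply: (pow_le hdb); rewrite mdegE /f.
  elim: (index_enum _) => [|i r ih]; first by rewrite big_nil.
  rewrite !big_cons; apply: pow_mulX => //; by case: (hG i).
have hdp : P (dpair D f).
  apply: hD; exists 0, f; split => //; last by rewrite add0r.
  by case: hI => -[].
have term a : a != b -> P (D@_a * mderivm a f).
  move=> hab; case: (ltnP (mdeg b) (mdeg a)) => hba.
    by apply: (idMr hid); apply: hhi.
  have [j hj] : exists j, (a j < b j)%N.
    apply: NNPP => hn.
    have hle j : (b j <= a j)%N by rewrite leqNgt; apply/negP => h; apply: hn; exists j.
    have [j0 hj0] : exists j0, a j0 != b j0.
      apply: NNPP => hn2; move/eqP: hab; apply; apply/mnmP => j.
      by apply/eqP; apply: NNPP => h; apply: hn2; exists j; apply/negP.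
    have hlt : (b j0 < a j0)%N by rewrite ltn_neqAle eq_sym hj0 hle.
    move: hba; rewrite !mdegE (bigD1 j0) //= [X in (_ <= X)%N](bigD1 j0) //=.
    apply/negP; rewrite -ltnNge -addSn; apply: leq_add => //.
    by apply: leq_sum => i _; apply: hle.
  apply: (idMl hid); rewrite mderivm_prod // (bigD1 j) //=; apply: (idMr hid).
  have [h eh] := iter_pow j (G j) (ltnW hj).
  rewrite /F eh; apply: (idMr hid).
  have -> : (b j - a j = (b j - a j).-1.+1)%N by rewrite prednK // subn_gt0.
  by rewrite exprS; apply: (idMr hid); case: (hG j).
have main : P (D@_b * mderivm b f) \/ P (D@_b).
  case hb : (b \in msupp D); last by right; rewrite memN_msupp_eq0 ?hb //; apply: (id0 hid).
  left; move: hdp; rewrite /dpair (bigD1_seq b) //= ?msupp_uniq // => hs.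
  have hr : P (\sum_(i <- msupp D | i != b) D@_i * mderivm i f).
    rewrite big_mkcond /=; apply: (id_sum hid) => a.
    by case: eqVneq => [_|hab] /=; [apply: (id0 hid) | apply: term].
  by have := idB hid hs hr; rewrite -addrA subrr addr0.
case: main => [hm|] //.
pose C := \prod_j ((b j)`!%:R * mderiv j (G j) ^+ b j).
have hC : P (mderivm b f - C).
  rewrite mderivm_prod //; apply: prod_congr => j.
  have [h eh] := iter_pow j (G j) (leqnn (b j)).
  rewrite /F eh subnn expr0 mul1r ffactnn.
  have e (x y : R) : P y -> P (x + y - x).
    by move=> hy; have -> : x + y - x = y by ring.
  by apply: e; apply: (idMr hid); case: (hG j).
have : P (D@_b * C).
  have -> : D@_b * C = D@_b * mderivm b f - D@_b * (mderivm b f - C) by ring.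
  by apply: (idB hid) => //; apply: (idMl hid).
case/hpr => // /prime_prod [j] /hpr [].
  rewrite -mpolyC_nat => /(P_const hPp) []; rewrite natK_neq0 //.
  by rewrite -lt0n fact_gt0.
by move=> /prime_pow; case: (hG j).
Qed.
End Key.

Unset Implicit Arguments.

Theorem lemma3p14 (K : fieldType) (n : nat)
    (charK0 : [pchar K] =i pred0)
    (I P : {mpoly K[n]} -> Prop)
    (hI : zero_dimensional I) (hP : is_minimal_prime I P) (d : nat) :
  forall D : diffop K n,
    in_DPd P I d D <-> in_DP P (ideal_add I (ideal_pow P d.+1)) D.
Proof.
have [hPp hIP _] := hP.
have hid : is_ideal P by case: hPp.
move=> D; split.
- move=> [hDI hdeg] f [g [h [hg hh ->]]].
  rewrite /dpair (eq_bigr (fun a => D@_a * mderivm a g + D@_a * mderivm a h)); last first.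
    by move=> a _; rewrite mderivmD mulrDr.
  rewrite big_split /=; apply: (idD hid); first exact: hDI.
  apply: (id_sum hid) => a; case: (leqP (mdeg a) d) => ha.
    by apply: (idMl hid); apply: (pow_mderivm hid hh); rewrite ltnS.
  by apply: (idMr hid); apply: hdeg.
- move=> hD; split.
    move=> f hf; apply: hD; exists f, 0; split => //; last by rewrite addr0.
    by case: (pow_ideal P d.+1).
  have H : forall t b, (msize D <= mdeg b + t)%N -> (d < mdeg b)%N -> P D@_b.
    elim => [|t ih] b hb hdb.
      rewrite memN_msupp_eq0; first exact: (id0 hid).
      apply/negP => /msize_mdeg_lt; rewrite addn0 in hb; by rewrite ltnNge hb.
    case: (leqP (msize D) (mdeg b + t)) => h; first exact: ih.
    apply: (key charK0 hI hPp hIP hD) => // a ha; apply: ih; last exact: ltn_trans hdb ha.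
    rewrite addnS -addSn in hb; apply: leq_trans hb _; by rewrite leq_add2r.
  move=> a ha; exact: (H (msize D) a (leq_addl _ _) ha).
Qed.
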